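(* Let $C$ be a column of type $B$ or of type $D$ which can be split. Then $C$ is admissible.
   Context: Fix $n\ge2$. $\mathcal B_n$ is the totally ordered alphabet $1\prec\cdots\prec n\prec0\prec\bar n\prec\cdots\prec\bar1$; $\mathcal D_n$ is the partially ordered alphabet $1\prec\cdots\prec n-1\prec n,\bar n\prec\overline{n-1}\prec\cdots\prec\bar1$ with $n,\bar n$ incomparable; $\bar{\bar k}=k$, $\bar 0=0$; a letter $x$ is unbarred if $x\preceq n$. A column of type $B$ is a vertical sequence $x_1,\dots,x_l$ of letters of $\mathcal B_n$ (read top to bottom; reading $\mathrm w(C)=x_1\cdots x_l$, height $h(C)=l$) which is strictly increasing except that the letter $0$ may be repeated. A column of type $D$ is a sequence $x_1,\dots,x_l$ of letters of $\mathcal D_n$ with $x_{i+1}\not\preceq x_i$ for all $i$. $C$ contains the pair $(z,\bar z)$ if $C$ contains a $0$ (for $z=0$) or both letters $z\preceq n$ and $\bar z$. $C$ is admissible if $h(C)\le n$ and for every pair $z=x_p$, $\bar z=x_q$ with $z\preceq n$ one has $|q-p|\ge h(C)-z+1$. Splitting, type $B$: let $I_C=\{z_1\succeq z_2\succeq\cdots\succeq z_s\}$ be the multiset consisting of $r$ copies of $0$ ($r$ = number of $0$'s in $C$) followed by the unbarred letters $z_{r+1}\succ\cdots\succ z_s$ such that $(z,\bar z)$ occurs in $C$. $C$ can be split if there exist unbarred letters $t_1\succ\cdots\succ t_s$ such that $t_1$ is the greatest letter with $t_1\prec z_1$, $t_1\notin C$, $\bar t_1\notin C$, and for $i\ge2$,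 $t_i$ is the greatest letter with $t_i\prec\min(t_{i-1},z_i)$, $t_i\notin C$, $\bar t_i\notin C$. Then $rC$ is obtained from $C$ by replacing $\bar z_i$ by $\bar t_i$ for each $i$ (for $z_i=0$ a letter $0$ is replaced) and reordering, and $lC$ by replacing $z_i$ by $t_i$ for each $i$ and reordering. Type $D$: $\widehat C$ is the column of type $B$ obtained from $C$ by replacing each factor $\bar n\,n$ by $00$; $C$ can be split if $\widehat C$ can, and then $lC=l\widehat C$, $rC=r\widehat C$. *)

(* Defs.v *)
From mathcomp Require Import all_boot all_order all_algebra.
Set Implicit Arguments. Unset Strict Implicit. Unset Printing Implicit Defensive.
Import Order.TTheory GRing.Theory Num.Theory.
Local Open Scope ring_scope.

(* Letters are encoded as integers: k (1 <= k <= n) is the unbarred letter k,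
   -k is the barred letter \bar k, and 0 is the letter 0 (type B only). A column is the sequence of its letters
   read top to bottom (x_1 :: x_2 :: ... :: x_l). *)

Definition barL (x : int) : int := - x.

(* ---------- Type B alphabet 1 < ... < n < 0 < \bar n < ... < \bar 1 ------- *)
Definition validB (n : nat) (x : int) : bool := `|x| <= n%:Z.

Definition rankB (n : nat) (x : int) : int :=
  if 0 < x then x else if x == 0 then n%:Z + 1 else 2 * n%:Z + 2 + x.

Definition ltB (n : nat) (x y : int) : bool := rankB n x < rankB n y.

Definition columnB (n : nat) (C : seq int) : bool :=
  all (validB n) C &&
  sorted (fun x y => ltB n x y || ((x == 0) && (y == 0))) C.

(* ---------- Type D alphabet: 1 < ... < n-1 < n, \bar n < \bar{n-1} < ... ---- *)
Definition validD (n : nat) (x : int) : bool := (0 < `|x|) && (`|x| <= n%:Z).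

Definition rankD (n : nat) (x : int) : int :=
  if 0 < x then x else 2 * n%:Z + 1 + x.

Definition ltD (n : nat) (x y : int) : bool :=
  (rankD n x < rankD n y) && ~~ ((x == n%:Z) && (y == - n%:Z)).

Definition leD (n : nat) (x y : int) : bool := (x == y) || ltD n x y.

Definition columnD (n : nat) (C : seq int) : bool :=
  all (validD n) C && sorted (fun x y => ~~ leD n y x) C.

(* unbarred letters (z <= n) are the z with 1 <= z <= n *)
Definition admissible (n : nat) (C : seq int) : Prop :=
  (size C <= n)%N /\
  forall (p q : nat) (z : int),
    (p < size C)%N -> (q < size C)%N -> 0 < z -> z <= n%:Z ->
    nth 0 C p = z -> nth 0 C q = barL z ->
    `|p%:Z - q%:Z| >= (size C)%:Z - z + 1.

(* I_C = z_1 >= ... >= z_s : r copies of 0 followed by the unbarred z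
   (decreasing) such that both z and \bar z occur in C *)
Definition I_C (n : nat) (C : seq int) : seq int :=
  nseq (count_mem 0 C) 0 ++
  [seq k%:Z | k <- rev (iota 1 n) & (k%:Z \in C) && (barL k%:Z \in C)].

(* for z in I_C (z = 0 or unbarred), an unbarred t satisfies t < z in B_n
   iff t < bndB n z as integers *)
Definition bndB (n : nat) (z : int) : int := if z == 0 then n%:Z + 1 else z.

(* upper bound (strict) for t_i (index i is 0-based): z_1 for i = 0,
   min(t_{i-1}, z_i) otherwise *)
Definition split_bound (n : nat) (C : seq int) (ts : seq int) (i : nat) : int :=
  if i == 0%N then bndB n (nth 0 (I_C n C) 0)
  else Num.min (nth 0 ts i.-1) (bndB n (nth 0 (I_C n C) i)).

Definition split_candidate (n : nat) (C : seq int) (b t : int) : bool :=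
  (1 <= t) && (t < b) && (t \notin C) && (barL t \notin C).

Definition is_greatest (P : int -> bool) (t : int) : Prop :=
  P t /\ forall u, P u -> u <= t.

Definition can_be_splitB (n : nat) (C : seq int) : Prop :=
  exists ts : seq int,
    size ts = size (I_C n C) /\
    forall i : nat, (i < size ts)%N ->
      is_greatest (split_candidate n C (split_bound n C ts i)) (nth 0 ts i).

Fixpoint hatD (n : nat) (C : seq int) : seq int :=
  match C with
  | x :: ((y :: s) as t) =>
      if (x == - n%:Z) && (y == n%:Z) then 0 :: 0 :: hatD n s
      else x :: hatD n t
  | _ => C
  end.

Definition can_be_splitD (n : nat) (C : seq int) : Prop :=
  can_be_splitB n (hatD n C).

(* Main.v *)
Require Import Defs.
From mathcomp Require Import all_boot all_order all_algebra zify.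
Import Order.TTheory GRing.Theory Num.Theory.
Set Implicit Arguments. Unset Strict Implicit.
Local Open Scope ring_scope.


Lemma count3 (T : Type) (a b c d e : pred T) (s : seq T) :
  (forall x, a x + b x + c x = d x + e x)%N ->
  (count a s + count b s + count c s = count d s + count e s)%N.
Proof.
move=> H; elim: s => //= x s IH; have := H x; lia.
Qed.

Lemma count_drop_le (T : Type) (P : pred T) k (s : seq T) :
  (count P (drop k s) <= count P s)%N.
Proof. by rewrite -{2}(cat_take_drop k s) count_cat leq_addl. Qed.

Lemma count_pointwise (T : Type) (x0 y0 : T) (P Q : pred T) (s1 s2 : seq T) :
  size s1 = size s2 ->
  (forall i, (i < size s2)%N -> P (nth y0 s2 i) -> Q (nth x0 s1 i)) ->
  (count P s2 <= count Q s1)%N.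
Proof.
elim: s2 s1 => [|y s2 IH] [|x s1] //= [Hs] H.
have := H 0%N erefl; have := IH s1 Hs (fun i hi => H i.+1 hi).
case: (P y); case: (Q x) => //=; try lia.
Qed.

Lemma pos_arg (f : int -> int) (C : seq int) (p q : nat) (z : int) :
  sorted (fun x y => f x <= f y) C ->
  (p < size C)%N -> (q < size C)%N -> nth 0 C p = z -> nth 0 C q = - z ->
  f z < f (- z) ->
  {in C, forall x, f x <= f z -> (x != 0) && (`|x| <= z)} ->
  {in C, forall x, f (- z) <= f x -> (x != 0) && (`|x| <= z)} ->
  (count (fun x => (x != 0) && (`|x| <= z)) C)%:Z <= z ->
  (size C)%:Z - z + 1 <= `|p%:Z - q%:Z|.
Proof.
move=> Hs Hp Hq Ep Eq Hf H1 H2 Hc.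
have tr : transitive (fun x y : int => f x <= f y) by move=> a b c h1 h2; exact: le_trans h1 h2.
have rf : reflexive (fun x y : int => f x <= f y) by move=> ?; exact: lexx.
have mono := sorted_leq_nth tr rf 0 Hs.
have pq : (p < q)%N.
  rewrite ltnNge; apply/negP => qp.
  have := mono q p Hq Hp qp; rewrite Ep Eq => h.
  by have := lt_le_trans Hf h; rewrite ltxx.
pose P : pred int := fun x => (x != 0) && (`|x| <= z).
have H1p : {in C, forall x, f x <= f z -> P x} := H1.
have H2p : {in C, forall x, f (- z) <= f x -> P x} := H2.
have {}Hc : ((count P C)%:Z <= z) := Hc.
have A1 : count P (take p.+1 C) = p.+1.
  have Hs1 : size (take p.+1 C) = p.+1 by rewrite size_takel.
  apply/eqP; rewrite -{2}Hs1 -all_count.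
  apply/(all_nthP 0) => i; rewrite size_takel // => hi.
  rewrite nth_take //; apply: H1p; first by apply: mem_nth; apply: leq_trans hi Hp.
  by rewrite -Ep; apply: mono; rewrite ?inE /=; lia.
have A2 : count P (drop q C) = (size C - q)%N.
  apply/eqP; rewrite -size_drop -all_count.
  apply/(all_nthP 0) => i; rewrite size_drop => hi.
  rewrite nth_drop; apply: H2p; first by apply: mem_nth; rewrite -ltn_subRL.
  by rewrite -Eq; apply: mono; rewrite ?inE /= ?leq_addr // -ltn_subRL.
have A3 : (count P (drop q C) <= count P (drop p.+1 C))%N.
  have -> : drop q C = drop (q - p.+1) (drop p.+1 C) by rewrite drop_drop subnK.
  exact: count_drop_le.
have A4 : count P C = (count P (take p.+1 C) + count P (drop p.+1 C))%N.
  by rewrite -count_cat cat_take_drop.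
move: Hc; rewrite A4 A1; move: A3; rewrite A2 => A3 Hc.
lia.
Qed.


Definition RB n := fun x y => ltB n x y || ((x == 0) && (y == 0)).
Definition RD n := fun x y => ~~ leD n y x.

Lemma F1 n x y : validD n x -> validD n y -> RD n x y -> ~~ ((x == - n%:Z) && (y == n%:Z)) ->
  rankB n x < rankB n y.
Proof.
rewrite /validD /RD /leD /ltD /rankD /rankB.
by repeat case: ifP => ?; lia.
Qed.

Lemma F2 n x : validD n x -> RD n x (- n%:Z) -> x != - n%:Z -> 0 < x.
Proof. rewrite /validD /RD /leD /ltD /rankD; by repeat case: ifP => ?; lia. Qed.

Lemma F3 n w : validD n w -> RD n n%:Z w -> w < 0.
Proof. rewrite /validD /RD /leD /ltD /rankD; by repeat case: ifP => ?; lia. Qed.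

Lemma F4 n w : validD n w -> w < 0 -> RB n 0 w.
Proof. rewrite /validD /RB /ltB /rankB ?ltxx ?eqxx /=; by repeat case: ifP => ?; lia. Qed.

Lemma F5 n x : validD n x -> 0 < x -> RB n x 0.
Proof. rewrite /validD /RB /ltB /rankB ?ltxx ?eqxx /=; by repeat case: ifP => ?; lia. Qed.

Lemma hatD_cc (n : nat) (x y : int) (s : seq int) : hatD n (x :: y :: s) =
  if (x == - n%:Z) && (y == n%:Z) then 0 :: 0 :: hatD n s else x :: hatD n (y :: s).
Proof. by []. Qed.

Lemma hatD_ind (P : seq int -> Prop) :
  P [::] -> (forall x, P [:: x]) ->
  (forall x y s, P s -> P (y :: s) -> P (x :: y :: s)) -> forall C, P C.
Proof.
move=> H0 H1 H2 C.
elim: {C}(size C).+1 {-2}C (ltnSn (size C)) => // m IH [|x [|y s]] Hs //.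
apply: H2; apply: IH; rewrite /= in Hs *; lia.
Qed.

Lemma size_hatD n C : size (hatD n C) = size C.
Proof.
elim/hatD_ind: C => // x y s IH1 IH2.
by rewrite hatD_cc; case: ifP => _ /=; rewrite ?IH1 ?IH2.
Qed.

Lemma nth_hatD n C i : nth 0 (hatD n C) i = nth 0 C i \/
  (nth 0 (hatD n C) i = 0 /\ `|nth 0 C i| = n%:Z).
Proof.
elim/hatD_ind: C i => [|x|x y s IH1 IH2] i; try by left.
rewrite hatD_cc; case: ifP => [/andP[/eqP-> /eqP->]|_].
  case: i => [|[|i]] /=; [by right; rewrite normrN| by right|exact: IH1].
by case: i => [|i] /=; [left|exact: IH2].
Qed.

Lemma all_hatD n (P : pred int) C : P 0 -> all P C -> all P (hatD n C).
Proof.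
move=> P0; elim/hatD_ind: C => // x y s IH1 IH2.
rewrite hatD_cc; case: ifP => _ /=; rewrite ?P0 /=.
  by case/and3P => _ _; exact: IH1.
by case/andP => -> /IH2.
Qed.

Lemma head_hatD n y s : (exists t, hatD n (y :: s) = y :: t) \/
  (y = - n%:Z /\ exists s', s = n%:Z :: s' /\ hatD n (y :: s) = 0 :: 0 :: hatD n s').
Proof.
case: s => [|w s]; first by left; exists [::].
rewrite hatD_cc; case: ifP => [/andP[/eqP-> /eqP->]|_]; last by left; eexists.
by right; split => //; exists s.
Qed.

Lemma sorted_hatD n C : columnD n C -> sorted (RB n) (hatD n C).
Proof.
elim/hatD_ind: C => // x y s IH1 IH2.
move=> /andP[va srt]; rewrite /= in va srt; case/and3P: va => vx vy vs; case/andP: srt => rxy ss.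
have cs : columnD n s by rewrite /columnD vs (path_sorted ss).
have cys : columnD n (y :: s) by rewrite /columnD /= vy vs ss.
rewrite hatD_cc; case: ifP => [/andP[/eqP ex /eqP ey]|nxy].
  move: (IH1 cs); case: s ss vs {IH1 IH2 cs cys} => [|w s] ss vs Hs.
    by rewrite /= /RB eqxx orbT.
  have rnw : RD n n%:Z w by move: ss => /= /andP[]; rewrite ey.
  case/andP: vs => vw _.
  have wneg := F3 vw rnw.
  have r00 : RB n 0 0 by rewrite /RB eqxx orbT.
  case: (head_hatD n w s) => [[t Ht]|[_ [s' [_ Ht]]]]; rewrite Ht in Hs *.
    by rewrite /= in Hs *; rewrite Hs r00 (F4 vw wneg).
  by rewrite /= in Hs *; rewrite r00; case/andP: Hs => _ ->.
move: (IH2 cys) => Hs.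
case: (head_hatD n y s) => [[t Ht]|[ey [s' [es Ht]]]]; rewrite Ht /= in Hs *; rewrite Hs andbT.
  by rewrite /RB /ltB (F1 vx vy rxy) ?nxy.
apply: (F5 vx); apply: (F2 vx); first by rewrite -ey.
by apply/eqP => ex; move: rxy; rewrite ex ey /leD eqxx.
Qed.


Definition Rp n := [seq Posz k | k <- iota 1 n].

Lemma count3_in (T : eqType) (a b c d e : pred T) (s : seq T) :
  {in s, forall x, a x + b x + c x = d x + e x}%N ->
  (count a s + count b s + count c s = count d s + count e s)%N.
Proof.
elim: s => //= x s IH H.
have := H x (mem_head _ _); have := IH (fun y hy => H y (mem_behead (s := x :: s) hy)); lia.
Qed.

Lemma memRp n x : (x \in Rp n) = (0 < x) && (x <= n%:Z).
Proof.
apply/idP/idP.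
  by case/mapP => k; rewrite mem_iota => hk ->; lia.
case: x => k // hk; apply/mapP; exists k => //; rewrite mem_iota; lia.
Qed.

Lemma uniq_Rp n : uniq (Rp n).
Proof. by rewrite map_inj_uniq ?iota_uniq // => a b [->]. Qed.

Lemma RB_trans n : transitive (RB n).
Proof.
move=> y x z; rewrite /RB /ltB /rankB; by repeat case: ifP => ?; lia.
Qed.

Lemma uniq_nz n D : columnB n D -> uniq [seq x <- D | x != 0].
Proof.
case/andP => _ Hs.
have Hs' : sorted (RB n) D := Hs.
have H1 := sorted_filter (@RB_trans n) (fun x => x != 0) Hs'.
have H2 : sorted (ltB n) [seq x <- D | x != 0].
  apply: (sub_in_sorted (P := fun x : int => x != 0)) H1; last by apply/allP => x; rewrite mem_filter => /andP[].
  move=> x y hx hy; rewrite /RB; case/orP => // /andP[/eqP ex _].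
  by move: hx; rewrite ex.
apply: (sorted_uniq _ _ H2).
  by move=> y x z; rewrite /ltB; apply: lt_trans.
by move=> x; rewrite /ltB ltxx.
Qed.

Lemma cnt_split n D (P : pred int) : all (validB n) D -> uniq [seq x <- D | x != 0] ->
  P 0 = false ->
  count P D = (count (fun k => (k \in D) && P k) (Rp n) +
               count (fun k => (- k \in D) && P (- k)) (Rp n))%N.
Proof.
move=> vD uD P0.
set D' := [seq x <- D | x != 0].
have e1 : count P D = count P D'.
  rewrite count_filter; apply: eq_count => x /=.
  by case: (eqVneq x 0) => [->|]; rewrite ?P0 ?andbT.
set R := Rp n ++ map -%R (Rp n).
have uR : uniq R.
  rewrite cat_uniq uniq_Rp (map_inj_uniq oppr_inj) uniq_Rp /= andbT.
  apply/hasPn => x /mapP[y hy ->]; rewrite memRp; move: hy; rewrite memRp; lia.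
have pe : perm_eq D' [seq x <- R | x \in D'].
  apply: uniq_perm => //; first exact: filter_uniq.
  move=> x; rewrite mem_filter; apply/idP/idP; last by case/andP.
  move=> hx; rewrite hx /=; move: hx; rewrite mem_filter => /andP[nx xD].
  have := allP vD x xD; rewrite /validB mem_cat => vx.
  case: (ltrP 0 x) => hx.
    by rewrite memRp hx /=; lia.
  apply/orP; right; apply/mapP; exists (- x); last by rewrite opprK.
  rewrite memRp; lia.
rewrite e1 ((permP pe) P) count_filter count_cat.
congr (_ + _)%N.
  apply: eq_count => k /=; rewrite /D' mem_filter.
  by case: (eqVneq k 0) => [->|]; rewrite ?P0 ?andbT ?andbF // andbC.
rewrite count_map; apply: eq_count => k /=; rewrite /D' mem_filter.
by case: (eqVneq (- k) 0) => [->|]; rewrite ?P0 ?andbT ?andbF // andbC.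
Qed.

Definition PS (n : nat) (D : seq int) : seq int := [seq k%:Z | k <- rev (iota 1 n) & (k%:Z \in D) && (barL k%:Z \in D)].

Lemma IC_eq n D : I_C n D = nseq (count_mem 0 D) 0 ++ PS n D.
Proof. by []. Qed.

Lemma memPS n D x : x \in PS n D -> 0 < x /\ x <= n%:Z.
Proof. by case/mapP => k; rewrite mem_filter mem_rev mem_iota => /andP[_ hk] ->; lia. Qed.

Lemma bndB_le n D i : bndB n (nth 0 (I_C n D) i) <= n%:Z + 1.
Proof.
case: (ltnP i (size (I_C n D))) => hi; last by rewrite nth_default.
have := mem_nth 0 hi; rewrite IC_eq mem_cat => /orP[/nseqP[-> _]|/memPS[h1 h2]].
  by rewrite /bndB eqxx.
move: h1 h2; rewrite /bndB; case: ifP => _; move: (nth _ _ _) => t; lia.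
Qed.

Lemma sb_le n D ts i : split_bound n D ts i <= bndB n (nth 0 (I_C n D) i).
Proof.
rewrite /split_bound; case: ifP => [/eqP -> //|_].
by rewrite ge_min lexx orbT.
Qed.

Definition Lz (z : int) := fun x : int => x <= z.
Definition Pz (z : int) := fun x : int => (x != 0) && (`|x| <= z).

Section Split.
Variables (n : nat) (D : seq int) (ts : seq int).
Hypothesis Hsz : size ts = size (I_C n D).
Hypothesis Hts : forall i : nat, (i < size ts)%N ->
      is_greatest (split_candidate n D (split_bound n D ts i)) (nth 0 ts i).

Lemma ts_cand i : (i < size ts)%N ->
  [/\ 1 <= nth 0 ts i, nth 0 ts i < split_bound n D ts i,
      nth 0 ts i \notin D & - nth 0 ts i \notin D].
Proof.
move=> hi; case: (Hts hi) => /andP[/andP[/andP[h1 h2] h3] h4] _; split => //.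
Qed.

Lemma ts_mem t : t \in ts -> [/\ 1 <= t, t <= n%:Z, t \notin D & - t \notin D].
Proof.
case/(nthP 0) => i hi <-; case: (ts_cand hi) => h1 h2 h3 h4; split => //.
have := sb_le n D ts i; have := bndB_le n D i; move: (split_bound _ _ _ _) (bndB _ _) h1 h2 => a b; move: (nth _ _ _) => u; lia.
Qed.

Lemma ts_uniq : uniq ts.
Proof.
have : sorted (fun x y => y < x) ts.
  apply/(sortedP 0) => i hi.
  case: (ts_cand hi) => _ h2 _ _.
  move: h2; rewrite /split_bound /= => h2.
  by apply: (lt_le_trans h2); rewrite ge_min lexx.
apply: sorted_uniq.
  by move=> y x z h1 h2; apply: lt_trans h2 h1.
by move=> x; rewrite ltxx.
Qed.


Hypothesis vD : all (validB n) D.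
Hypothesis uD : uniq [seq x <- D | x != 0].

Definition prD k := (k \in D) && (- k \in D).
Definition abD k := (k \notin D) && (- k \notin D).

Lemma size_PS : size (PS n D) = count prD (Rp n).
Proof.
rewrite /PS size_map size_filter count_rev /Rp count_map.
by apply: eq_count => k.
Qed.

Lemma size_IC : size (I_C n D) = (count_mem (0:int) D + count prD (Rp n))%N.
Proof. by rewrite IC_eq size_cat size_nseq size_PS. Qed.

Lemma ts_le_ab : (size ts <= count abD (Rp n))%N.
Proof.
rewrite -size_filter; apply: uniq_leq_size (ts_uniq) _ => t ht.
case: (ts_mem ht) => h1 h2 h3 h4.
by rewrite mem_filter /abD h3 h4 memRp; apply/andP; split => //; lia.
Qed.

Lemma size_le : (size D <= n)%N.
Proof.
have e := count_predC (pred1 (0:int)) D.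
have cs := @cnt_split n D (predC (pred1 (0:int))) vD uD erefl.
have e3 := @count3_in _ (fun k => (k \in D) && predC (pred1 (0:int)) k)
   (fun k => (- k \in D) && predC (pred1 (0:int)) (- k)) abD predT prD (Rp n).
rewrite count_predT /Rp size_map size_iota -/(Rp n) in e3.
have hab := ts_le_ab; rewrite Hsz size_IC in hab.
have H : (count (fun k => (k \in D) && predC (pred1 (0:int)) k) (Rp n) +
        count (fun k => (- k \in D) && predC (pred1 (0:int)) (- k)) (Rp n) +
        count abD (Rp n))%N = (n + count prD (Rp n))%N.
  apply: e3 => k; rewrite memRp => /andP[k0 _].
  have nk : (k != 0) by rewrite gt_eqF.
  have nk' : (- k != 0) by rewrite oppr_eq0.
  rewrite /= nk nk' /abD /prD !andbT.
  by case: (k \in D); case: (- k \in D).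
rewrite -cs in H.
move: e H hab; move: (count_mem _ D) (count (predC _) D) (count abD _) (count prD _) (size D) => a b c d f.
lia.
Qed.

Lemma count_le (zn : nat) : (zn <= n)%N ->
  (count (Pz zn%:Z) D <= zn)%N.
Proof.
move=> zle.
set P := Pz zn%:Z.
have cs := @cnt_split n D P vD uD erefl.
set c1 := count _ (Rp n) in cs; set c2 := count _ (Rp n) in cs.
set A := count (fun k => abD k && (k <= zn%:Z)) (Rp n).
set B := count (fun k => prD k && (k <= zn%:Z)) (Rp n).
set Z := count (fun k => (k <= zn%:Z)) (Rp n).
have e3 : (c1 + c2 + A = Z + B)%N.
  apply: count3_in => k; rewrite memRp => /andP[k0 _].
  have nk : (k != 0) by rewrite gt_eqF.
  have nk' : (- k != 0) by rewrite oppr_eq0.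
  rewrite /P /Pz /= nk nk' normrN gtr0_norm // /abD /prD.
  by case: (k \in D); case: (- k \in D); case: (k <= zn%:Z).
have hZ : (Z <= zn)%N.
  rewrite /Z -size_filter.
  have sz : size (Rp zn) = zn by rewrite size_map size_iota.
  rewrite -[X in (_ <= X)%N]sz.
  apply: uniq_leq_size; first by rewrite filter_uniq // uniq_Rp.
  by move=> x; rewrite mem_filter !memRp => /and3P[h1 h2 h3]; apply/andP; split; lia.
set r := count_mem 0 D.
have hA : (count (Lz zn) (drop r ts) <= A)%N.
  rewrite /A -!size_filter; apply: uniq_leq_size.
    by rewrite filter_uniq // drop_uniq // ts_uniq.
  move=> t; rewrite !mem_filter => /andP[tz /mem_drop ht]; rewrite /Lz in tz.
  case: (ts_mem ht) => h1 h2 h3 h4.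
  by rewrite /abD h3 h4 tz memRp; apply/andP; split => //; lia.
have hB : (count (Lz zn) (PS n D) <= count (Lz zn) (drop r ts))%N.
  apply: (@count_pointwise _ 0 0).
    by rewrite size_drop Hsz IC_eq size_cat size_nseq addKn.
  move=> i hi; rewrite nth_drop.
  have hri : (r + i < size ts)%N by rewrite Hsz IC_eq size_cat size_nseq ltn_add2l.
  case: (ts_cand hri) => _ h2 _ _.
  have h5 := sb_le n D ts (r + i).
  have e6 : nth 0 (I_C n D) (r + i) = nth 0 (PS n D) i.
    by rewrite IC_eq nth_cat size_nseq ltnNge leq_addr /= addKn.
  have [p0 _] := memPS (mem_nth 0 hi).
  have e7 : bndB n (nth 0 (PS n D) i) = nth 0 (PS n D) i.
    by rewrite /bndB gt_eqF.
  rewrite e6 e7 in h5; rewrite /Lz.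
  move: h2 h5; move: (split_bound _ _ _ _) (nth 0 ts _) (nth 0 (PS n D) i) => a b c.
  rewrite /=. lia.
have hC : count (Lz zn) (PS n D) = B.
  rewrite /PS count_map count_filter count_rev /B /Rp count_map.
  by apply: eq_count => k /=; rewrite /Lz andbC.
rewrite cs; lia.
Qed.

End Split.

Lemma coreB n D : columnB n D -> can_be_splitB n D -> admissible n D.
Proof.
move=> cD [ts [Hsz Hts]].
have vD : all (validB n) D by case/andP: cD.
have uD := uniq_nz cD.
split; first exact: (@size_le n D ts Hsz Hts vD uD).
move=> p q [k|k] hp hq z0 zn Ep Eq; last by [].
have Hs : sorted (fun x y => rankB n x <= rankB n y) D.
  case/andP: cD => _ Hs; apply: (sub_sorted _ Hs) => x y.
  case/orP => [/ltW //|/andP[/eqP-> /eqP->]]; exact: lexx.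
apply: (pos_arg Hs hp hq Ep Eq).
- by rewrite /rankB; repeat case: ifP => ?; lia.
- move=> x /(allP vD); rewrite /validB /rankB; by repeat case: ifP => ?; lia.
- move=> x /(allP vD); rewrite /validB /rankB; by repeat case: ifP => ?; lia.
- have h : (k <= n)%N by rewrite -lez_nat.
  have := (@count_le n D ts Hsz Hts vD uD k h).
  rewrite /Pz; move: (count _ D) => c; lia.
Qed.

Theorem mainTheorem3 (n : nat) (C : seq int) :
  (2 <= n)%N ->
  (columnB n C /\ can_be_splitB n C) \/ (columnD n C /\ can_be_splitD n C) ->
  admissible n C.
Proof.
move=> _; case => [[cB sB]|[cD sD]]; first exact: coreB.
have cB : columnB n (hatD n C).
  apply/andP; split; last exact: (sorted_hatD cD).
  apply: all_hatD => //; case/andP: cD => vC _.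
  by apply: sub_all vC => x; rewrite /validD /validB => /andP[].
case: (coreB cB sD); rewrite size_hatD => sz H.
split => // p q z hp hq z0 zn Ep Eq; rewrite /barL in Eq.
case: (eqVneq z n%:Z) => [ezn|nzn].
  have pq : p != q.
    apply/eqP => e; move: Eq; rewrite -e Ep => h; lia.
  rewrite ezn; lia.
have Ep' : nth 0 (hatD n C) p = z.
  case: (nth_hatD n C p) => [->|[_ h]] //; rewrite Ep in h; lia.
have Eq' : nth 0 (hatD n C) q = - z.
  case: (nth_hatD n C q) => [->|[_ h]] //; rewrite Eq normrN in h; lia.
by apply: H; rewrite ?size_hatD.
Qed.
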